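(* Let $(S_n,X_n)_{n\ge 0}$ be an alternating non-homogeneous semi-Markov process with $S_0=1$, $X_0=0$, whose semi-Markov kernels are, for each $x\ge0$, Weibull distributions $$G_T(x,\tau)=1-e^{-(\lambda_T(x)\tau)^{k_T(x)}},\qquad \tau\ge0,\ T\in\{Y,Z\},$$ with measurable shape functions $k_Y,k_Z:[0,\infty)\to(0,\infty)$ and rate functions $\lambda_Y,\lambda_Z:[0,\infty)\to(0,\infty)$. Suppose (i) there is $c>0$ with $\lambda_Y(x)\le c$ and $\lambda_Z(x)\le c$ for all $x\ge0$, and (ii) either there is $k\ge1$ with $1\le k_Y(x)\le k$ and $1\le k_Z(x)\le k$ for all $x\ge 0$, or there is $k>0$ with $k_Y(x)=k_Z(x)=k$ for all $x\ge0$. Then $\mathbb P(X_\infty<\infty)=0$.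
   Context: Let $(S_n,X_n)_{n\ge0}$ be random variables on a probability space with $S_n\in\{0,1\}$, $0=X_0\le X_1\le X_2\le\cdots$, $S_0=1$, and alternating states: $S_n=1$ for even $n$ and $S_n=0$ for odd $n$. Write $T_{n+1}=X_{n+1}-X_n$ (sojourn times). The process is called an alternating non-homogeneous semi-Markov process with semi-Markov kernels $G_Y,G_Z$ if for every $n\ge 0$ the conditional distribution of $T_{n+1}$ given $(S_0,X_0),\dots,(S_n,X_n)$ depends only on $(S_n,X_n)$ (and not on $n$), with $\mathbb P(T_{n+1}\le \tau\mid S_n=1,X_n=x)=G_Y(x,\tau)$ and $\mathbb P(T_{n+1}\le\tau\mid S_n=0,X_n=x)=G_Z(x,\tau)$ for all $x,\tau\ge 0$; here for each $x\ge0$, $G_Y(x,\cdot)$ and $G_Z(x,\cdot)$ are distribution functions on $[0,\infty)$, jointly measurable in $(x,\tau)$, absolutely continuous with densities $g_Y(x,\cdot)$, $g_Z(x,\cdot)$. Periods spent in state $1$ are called $Y$-phases, periods in state $0$ are $Z$-phases. The explosion time is $X_\infty=\lim_{n\to\infty}X_n$. *)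

(* Defs.v *)
From HB Require Import structures.
From mathcomp Require Import all_boot all_order all_algebra.
From mathcomp Require Import all_classical all_reals all_analysis.
Set Implicit Arguments. Unset Strict Implicit. Unset Printing Implicit Defensive.
Import Order.TTheory GRing.Theory Num.Theory.
Local Open Scope classical_set_scope.
Local Open Scope ring_scope.

Definition weibull_kernel {R : realType} (lam k : R -> R) (x tau : R) : R :=
  1 - expR (- ((lam x * tau) `^ (k x))).

(* sigma-algebra generated by X_0, ..., X_n (the states S_0..S_n are
   deterministic, so they carry no information). *)
Definition history {d} {T : measurableType d} {R : realType}
  (X : nat -> T -> R) (n : nat) : set (set T) :=
  <<s [set A | exists i (B : set R), (i <= n)%N /\ measurable B /\
                                     A = X i @^-1` B] >>.

(* Kernel in force at step n: state S_n = 1 (Y-phase) for even n,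
   S_n = 0 (Z-phase) for odd n. *)
Definition kernel_at {R : realType} (GY GZ : R -> R -> R) (n : nat) :=
  if odd n then GZ else GY.

(* (S_n, X_n) with S_n alternating (S_0 = 1) is an alternating non-homogeneous
   semi-Markov process with semi-Markov kernels GY, GZ:
   X_0 = 0, X_n nondecreasing, X_n random variables, and for every n, the
   conditional distribution of T_{n+1} = X_{n+1} - X_n given the past
   (S_0,X_0),...,(S_n,X_n) is G_{S_n}(X_n, .), i.e. for every event A of the
   past and every tau >= 0,
     P(A /\ T_{n+1} <= tau) = E[1_A G_{S_n}(X_n, tau)]. *)
Definition alt_semi_markov {d} {T : measurableType d} {R : realType}
  (P : probability T R) (X : nat -> T -> R) (GY GZ : R -> R -> R) : Prop :=
  [/\ (forall n, measurable_fun setT (X n)),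
      (forall w, X 0%N w = 0),
      (forall n w, X n w <= X n.+1 w) &
      (forall n (A : set T) (tau : R), history X n A -> 0 <= tau ->
         P (A `&` [set w | X n.+1 w - X n w <= tau]) =
         (\int[P]_(w in A) (kernel_at GY GZ n (X n w) tau)%:E)%E)].

Definition explosion_time {d} {T : measurableType d} {R : realType}
  (X : nat -> T -> R) (w : T) : \bar R :=
  limn (fun n => (X n w)%:E).

(* Main.v *)
Require Import Defs.
From HB Require Import structures.
From mathcomp Require Import all_boot all_order all_algebra.
From mathcomp Require Import all_classical all_reals all_analysis.
From mathcomp Require Import lra measurable_realfun.
Import Order.TTheory GRing.Theory Num.Theory numFieldNormedType.Exports.
Local Open Scope classical_set_scope.
Local Open Scope ring_scope.

Section Aux.
Context {R : realType}.

Lemma weib_bound (lam k : R -> R) (c x : R) : 0 < c -> 0 < lam x -> lam x <= c ->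
  0 < k x -> 0 <= weibull_kernel lam k x c^-1 <= 1 - expR (-1).
Proof.
move=> c0 l0 lc k0; rewrite /weibull_kernel.
set p := _ `^ _.
have p0 : 0 <= p by apply: powR_ge0.
have p1 : p <= 1.
  rewrite /p -(powRr0 (lam x * c^-1)).
  apply: ger_powR; last exact: ltW.
  apply/andP; split; first by rewrite mulr_gt0 // invr_gt0.
  by rewrite -(mulfV (lt0r_neq0 c0)) ler_wpM2r // invr_ge0 ltW.
apply/andP; split.
  by rewrite subr_ge0 -[leRHS]expR0 ler_expR oppr_le0.
by rewrite lerD2l lerN2 ler_expR lerN2.
Qed.

Lemma integral_le_cst d (T : measurableType d) (mu : {measure set T -> \bar R})
  (A : set T) (g : T -> R) (q : R) :
  (forall w, 0 <= g w <= q) ->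
  (\int[mu]_(w in A) (g w)%:E <= \int[mu]_(w in A) q%:E)%E.
Proof.
move=> hg.
have q0 : 0 <= q by case/andP: (hg point) => /le_trans; apply.
rewrite !ge0_integralE.
- apply: ereal_sup_le => _ /= [h hh <-]; exists h => //= x.
  apply: le_trans (hh x) _; rewrite /patch; case: ifP => _ //.
  by rewrite lee_fin; case/andP: (hg x).
- by move=> x _; rewrite lee_fin.
- by move=> x _; rewrite lee_fin; case/andP: (hg x).
Qed.

Definition Gen {d} {T : measurableType d} (X : nat -> T -> R) (n : nat) : set (set T) :=
  [set A | exists i (B : set R), (i <= n)%N /\ measurable B /\ A = X i @^-1` B].

Section hist.
Context {d} {T : measurableType d} {X : nat -> T -> R}.
Hypothesis mX : forall n, measurable_fun setT (X n).

Lemma history_meas n A : history X n A -> measurable A.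
Proof.
apply: smallest_sub; first exact: sigma_algebra_measurable.
move=> _ [i [B [_ [mB ->]]]]; rewrite -[X i @^-1` B]setTI; exact: mX measurableT _ mB.
Qed.

Lemma history_mono n m : (n <= m)%N -> history X n `<=` history X m.
Proof.
move=> nm; apply: smallest_sub; first exact: smallest_sigma_algebra.
move=> _ [i [B [im [mB ->]]]]; apply: sub_sigma_algebra; exists i, B; split => //.
exact: leq_trans im nm.
Qed.

Lemma history_I n A B : history X n A -> history X n B -> history X n (A `&` B).
Proof. move=> hA hB; exact: (@measurableI _ (g_sigma_algebraType (Gen X n)) A B hA hB). Qed.

Lemma history_T n : history X n setT.
Proof. exact: (@measurableT _ (g_sigma_algebraType (Gen X n))). Qed.

Lemma history_D n (t : R) : history X n.+1 [set w | X n.+1 w - X n w <= t].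
Proof.
have mXi i : (i <= n.+1)%N ->
    measurable_fun setT (X i : g_sigma_algebraType (Gen X n.+1) -> R).
  move=> ni _ B mB; rewrite setTI; apply: sub_sigma_algebra; exists i, B; split => //.
have H := measurable_funB (mXi _ (leqnn _)) (mXi _ (leqnSn _)) measurableT
   (measurable_itv `]-oo, t]).
rewrite setTI in H.
suff E : [set w | X n.+1 w - X n w <= t] =
   ((X n.+1 \- X n) @^-1` [set` `]-oo, t]]) by rewrite E; exact H.
by apply/seteqP; split => w /=; rewrite in_itv /=.
Qed.

End hist.
End Aux.

Fixpoint Ev {T : Type} (D : nat -> set T) (m j : nat) : set T :=
  if j is j'.+1 then Ev D m j' `&` D (m + j')%N else setT.

Theorem proposition2 (d : measure_display) (T : measurableType d)
  (R : realType) (P : probability T R) (X : nat -> T -> R)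
  (kY kZ lamY lamZ : R -> R) :
  measurable_fun [set x : R | 0 <= x] kY ->
  measurable_fun [set x : R | 0 <= x] kZ ->
  measurable_fun [set x : R | 0 <= x] lamY ->
  measurable_fun [set x : R | 0 <= x] lamZ ->
  (forall x, 0 <= x -> 0 < kY x /\ 0 < kZ x /\ 0 < lamY x /\ 0 < lamZ x) ->
  alt_semi_markov P X (weibull_kernel lamY kY) (weibull_kernel lamZ kZ) ->
  (exists c, 0 < c /\ forall x, 0 <= x -> lamY x <= c /\ lamZ x <= c) ->
  ((exists k, 1 <= k /\ forall x, 0 <= x ->
       (1 <= kY x <= k) /\ (1 <= kZ x <= k)) \/
   (exists k, 0 < k /\ forall x, 0 <= x -> kY x = k /\ kZ x = k)) ->
  P [set w | (explosion_time X w < +oo)%E] = 0%E.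
Proof.
move=> _ _ _ _ hpos [mX X0 Xnd HK] [c [c0 hc]] _.
set t0 := c^-1.
set q := 1 - expR (-1) : R.
pose D n := [set w | X n.+1 w - X n w <= t0].
have ndr w : nondecreasing_seq (X ^~ w) by apply/nondecreasing_seqP => n; exact: Xnd.
have Xge0 n w : 0 <= X n w.
  by elim: n => [|n IH]; [rewrite X0 | exact: le_trans IH (Xnd n w)].
have gb n w : 0 <= kernel_at (weibull_kernel lamY kY) (weibull_kernel lamZ kZ) n
    (X n w) t0 <= q.
  have [k1 [k2 [l1 l2]]] := hpos _ (Xge0 n w); have [h1 h2] := hc _ (Xge0 n w).
  by rewrite /kernel_at; case: ifP => _; exact: weib_bound.
have e1 : 0 < expR (-1 : R) := expR_gt0 _.
have e2 : expR (-1 : R) <= 1 by rewrite -[leRHS]expR0 ler_expR; lra.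
have q0 : 0 <= q by rewrite /q; lra.
have q1 : q < 1 by rewrite /q; lra.
have hD n : history X n.+1 (D n) := history_D n t0.
have mD n : measurable (D n) := history_meas mX _ _ (hD n).
have hE m j : history X (m + j) (Ev D m j).
  elim: j => [|j IH] /=; first exact: history_T.
  rewrite addnS; apply: history_I; last exact: hD.
  exact: history_mono IH.
have PE m j : (P (Ev D m j) <= (q ^+ j)%:E)%E.
  elim: j => [|j IH] /=; first by rewrite probability_setT expr0.
  have hj := hE m j.
  rewrite (HK _ _ t0 hj); last by rewrite invr_ge0 ltW.
  apply: le_trans (@integral_le_cst R _ _ P _ _ _ (gb (m + j)%N)) _.
  rewrite integral_cst; last exact: history_meas mX _ _ hj.
  by rewrite exprS EFinM lee_wpmul2l // lee_fin.
pose F m := \bigcap_(n in [set n | (m <= n)%N]) D n.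
have PF m : P (F m) = 0%E.
  have mF : measurable (F m) by apply: bigcap_measurableType => n _; exact: mD.
  have le j : (P (F m) <= (q ^+ j)%:E)%E.
    apply: le_trans (PE m j); apply: le_measure; rewrite ?inE //.
      exact: history_meas mX _ _ (hE m j).
    move=> w Fw; elim: j => [|j IH] //=; split => //; apply: Fw; exact: leq_addr.
  have fin : P (F m) \is a fin_num := fin_num_measure P _ mF.
  rewrite -(fineK fin); congr EFin.
  have x0 : 0 <= fine (P (F m)) := fine_ge0 (measure_ge0 P (F m)).
  have le' j : fine (P (F m)) <= q ^+ j by rewrite -lee_fin fineK.
  move: (fine (P (F m))) x0 le' => x x0 {}le.
  apply/eqP; rewrite eq_le x0 andbT.
  have qn : q ^+ n @[n --> \oo] --> (0 : R) by apply: cvg_expr; rewrite ger0_norm.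
  have : x <= lim (q ^+ n @[n --> \oo]).
    by apply: limr_ge; [exact: cvgP qn | apply: nearW => n; exact: le].
  by rewrite (cvg_lim _ qn).
have expl w : explosion_time X w = ereal_sup (range (fun n => (X n w)%:E)).
  apply/cvg_lim => //; apply: ereal_nondecreasing_cvgn.
  by apply/nondecreasing_seqP => n; rewrite lee_fin.
have bnd w : (explosion_time X w < +oo)%E <-> exists M : nat, forall n, X n w <= M%:R.
  rewrite expl; split.
  - have ub n : ((X n w)%:E <= ereal_sup (range (fun n => (X n w)%:E)))%E.
      by apply: ereal_sup_ubound; exists n.
    move: ub (ub 0%N); case: (ereal_sup _) => [r| |] //= ub ub0 _.
    rewrite X0 lee_fin in ub0.
    exists (Num.bound r) => n; apply: ltW; apply: le_lt_trans (archi_boundP ub0).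
    by rewrite -lee_fin.
  - move=> [M hM]; apply: (@le_lt_trans _ _ (M%:R)%:E); last exact: ltry.
    by apply: ge_ereal_sup => _ [n _ <-]; rewrite lee_fin.
have mS : measurable [set w | (explosion_time X w < +oo)%E].
  have -> : [set w | (explosion_time X w < +oo)%E] =
      \bigcup_(M in [set: nat]) \bigcap_(n in [set: nat]) (X n @^-1` [set` `]-oo, M%:R]]).
    apply/seteqP; split => w /=.
    - move/bnd=> [M hM]; exists M => // n _ /=; rewrite in_itv /=; exact: hM.
    - move=> [M _ hM]; apply/bnd; exists M => n; have := hM n I; by rewrite /= in_itv /=.
  apply: bigcup_measurable => M _; apply: bigcap_measurableType => n _.
  rewrite -[X n @^-1` _]setTI; exact: mX measurableT _ (measurable_itv _).
have cov : [set w | (explosion_time X w < +oo)%E] `<=` \bigcup_n F n.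
  move=> w /bnd [M hM].
  apply: contrapT => nF.
  have hinf m : exists2 n, (m <= n)%N & ~ D n w.
    apply: contrapT => hn; apply: nF; exists m => // n mn; apply: contrapT => Dn.
    by apply: hn; exists n.
  have grow j : exists n, j%:R * t0 <= X n w.
    elim: j => [|j [n hn]]; first by exists 0%N; rewrite mul0r X0.
    have [n' nn' Dn'] := hinf n.
    exists n'.+1.
    have h1 := ndr w _ _ nn'.
    move/negP: Dn'; rewrite -ltNge => Dn'.
    rewrite -natr1 mulrDl mul1r; lra.
  have t0p : 0 < t0 by rewrite invr_gt0.
  have M0 : 0 <= M%:R * c by rewrite mulr_ge0 // ltW.
  have [n hn] := grow (Num.bound (M%:R * c)).
  have := archi_boundP M0; rewrite -ltr_pdivlMr // => hb.
  move: hb; rewrite -/t0 => hb; have := hM n; lra.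
apply/eqP; rewrite eq_le measure_ge0 andbT.
have mFn n : measurable (F n) by apply: bigcap_measurableType => k _; exact: mD.
apply: le_trans (measure_sigma_subadditive P mFn mS cov) _.
by rewrite eseries0 // => n _ _; exact: PF.
Qed.
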